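(* Fix an integer $d\geqslant 3$. Then there is a constant $C>0$ (depending only on $d$) such that $P(n,d)\leqslant C\,n^{2d-3}$ for all sufficiently large $n$; i.e., $P(n,d)=O(n^{2d-3})$ as $n\to\infty$.
   Context: Let $S_n$ be the symmetric group on $[n]$, permutations written as $\pi=(\pi(1),\dots,\pi(n))$. The characteristic set of $\pi$ is $A(\pi)=\{(\pi(i),\pi(i+1)):1\leqslant i<n\}$, and the block permutation distance is $d_B(\pi_1,\pi_2)=|A(\pi_1)\setminus A(\pi_2)|$ (equivalently, $d_B(\pi_1,\pi_2)+1$ is the minimum number of consecutive segments into which $\pi_1$ must be cut so that $\pi_2$ is obtained by rearranging these segments). The $(n,d)$-block permutation graph $\mathcal{G}_{n,d}$ has vertex set $S_n$, with distinct $\pi,\sigma$ adjacent iff $d_B(\pi,\sigma)<d$. Let $\mathcal{H}_{n,d}$ be the subgraph of $\mathcal{G}_{n,d}$ induced by the neighborhood of the identity permutation $(1,2,\dots,n)$ (i.e. by all $\sigma$ with $1\leqslant d_B(\sigma,\mathrm{id})\leqslant d-1$), and let $P(n,d)$ denote the number of edges of $\mathcal{H}_{n,d}$. *)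

(* Defs.v *)
From mathcomp Require Import all_boot all_order all_fingroup.
Set Implicit Arguments. Unset Strict Implicit. Unset Printing Implicit Defensive.

(* Permutations of [n] are represented by 'S_n = {perm 'I_n}, i.e. on {0,..,n-1}
   (a relabeling of {1,..,n}); the sequence form is (p 0, p 1, ..., p (n-1)). *)

Definition charset (n : nat) (p : 'S_n) : {set 'I_n * 'I_n} :=
  [set x | [exists i : 'I_n, exists j : 'I_n,
             (j == i.+1 :> nat) && (x == (p i, p j))]].

Definition dB (n : nat) (p1 p2 : 'S_n) : nat := #|charset p1 :\: charset p2|.

Definition adjB (n d : nat) (p q : 'S_n) : bool := (p != q) && (dB p q < d).

Definition Hvert (n d : nat) : {set 'S_n} :=
  [set s : 'S_n | (1 <= dB s 1) && (dB s 1 <= d - 1)].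

Definition Pnd (n d : nat) : nat :=
  #|[set E : {set 'S_n} | [exists s : 'S_n, exists t : 'S_n,
       [&& E == [set s; t], s \in Hvert n d, t \in Hvert n d & adjB d s t]]]|.

(* Main.v *)
Require Import Defs.
From mathcomp Require Import all_boot all_order all_fingroup.
From mathcomp Require Import zify.
Set Implicit Arguments. Unset Strict Implicit. Unset Printing Implicit Defensive.

Definition nxt n (s : 'S_n.+1) (v : 'I_n.+1) : option 'I_n.+1 :=
  let i := (s^-1)%g v in if i.+1 < n.+1 then Some (s (inord i.+1)) else None.

Lemma nxtP n (s : 'S_n.+1) v u :
  (nxt s v == Some u) = (val ((s^-1)%g u) == (val ((s^-1)%g v)).+1).
Proof.
rewrite /nxt; case: ifP => h.
  apply/eqP/eqP.
    by move=> [<-]; rewrite permK; apply: inordK.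
  by move=> e; congr Some; rewrite -e inord_val permKV.
symmetry; apply/negbTE/eqP => e; move: (ltn_ord ((s^-1)%g u)); rewrite e h.
done.
Qed.

Definition Eset n (s : 'S_n.+1) : {set 'I_n.+1} :=
  [set v | omap val (nxt s v) != Some v.+1].

Lemma charsetP n (s : 'S_n.+1) v u : ((v,u) \in charset s) = (nxt s v == Some u).
Proof.
rewrite inE nxtP; apply/existsP/eqP.
  case=> i /existsP [j /andP [/eqP ji /eqP [-> ->]]].
  by rewrite !permK.
move=> e; exists ((s^-1)%g v); apply/existsP; exists ((s^-1)%g u).
by rewrite e eqxx /= !permKV eqxx.
Qed.

Lemma Eset_out n (s : 'S_n.+1) v : v \notin Eset s -> omap val (nxt s v) = Some v.+1.
Proof. by rewrite inE negbK => /eqP. Qed.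

Lemma ordmax_E n (s : 'S_n.+1) : ord_max \in Eset s.
Proof.
rewrite inE; case: (nxt s ord_max) => [u|] //=.
apply/eqP => [[e]]; have := ltn_ord u; rewrite e ltnn; done.
Qed.

Lemma card_charset n (s : 'S_n.+1) : n <= #|charset s|.
Proof.
pose f (i : 'I_n) := (s (widen_ord (leqnSn n) i), s (lift ord0 i)).
have fi : injective f.
  move=> i j [e _]; apply/val_inj; move/perm_inj: e => /(congr1 val) //.
have e : #|f @: [set: 'I_n]| = n by rewrite card_imset // cardsT card_ord.
apply: (leq_trans (eq_leq (esym e))); apply: subset_leq_card; apply/subsetP => x /imsetP [i _ ->].
rewrite inE; apply/existsP; exists (widen_ord (leqnSn n) i); apply/existsP.
by exists (lift ord0 i); rewrite !eqxx andbT.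
Qed.

Lemma E_card n (s : 'S_n.+1) : #|Eset s| <= dB s 1 + 1.
Proof.
have sub: Eset s \subset s ord_max |: (fst @: (charset s :\: charset 1)).
  apply/subsetP => v; rewrite in_setU1 inE.
  case e: (nxt s v) => [u|] hv.
    apply/orP; right; apply/imsetP; exists (v,u) => //.
    rewrite inE (charsetP s) e eqxx andbT; apply/negP; rewrite charsetP nxtP invg1 !perm1.
    by move=> /eqP h; move: hv; rewrite /= h eqxx.
  apply/orP; left; move: e; rewrite /nxt; case: ifP => // h _.
  have hm : (s^-1)%g v = ord_max.
    by apply/val_inj; move: (ltn_ord ((s^-1)%g v)) h => /=; lia.
  by rewrite -hm permKV.
apply: (leq_trans (subset_leq_card sub)).
rewrite cardsU1 addnC leq_add //; first exact: leq_imset_card.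
by case: (s ord_max \notin _).
Qed.

Lemma inter_card n (s t : 'S_n.+1) :
  #|charset s :&: charset t| + (#|Eset s :|: Eset t| - #|Eset s :&: Eset t|) <= n.+1.
Proof.
set ST := charset s :&: charset t.
have inj: {in ST &, injective fst}.
  move=> [v u] [v' u']; rewrite !in_setI !charsetP => /andP[/eqP h1 _] /andP[/eqP h2 _] /= e.
  by subst v'; rewrite h1 in h2; case: h2 => ->.
rewrite -(card_in_imset inj).
set D := (Eset s :|: Eset t) :\: (Eset s :&: Eset t).
have sub : fst @: ST \subset ~: D.
  apply/subsetP => v /imsetP [[v0 u] + ->] /=.
  rewrite in_setI !charsetP => /andP [/eqP hs /eqP ht]; rewrite in_setC in_setD in_setI in_setU.
  case: (boolP (v0 \in Eset s)) => a; case: (boolP (v0 \in Eset t)) => b //=.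
    by move: (Eset_out b) a; rewrite ht inE hs => ->; rewrite eqxx.
  by move: (Eset_out a) b; rewrite hs inE ht => ->; rewrite eqxx.
have h1 := subset_leq_card sub.
have h2 := cardsC D; rewrite card_ord in h2.
have h3 : #|D| = #|Eset s :|: Eset t| - #|Eset s :&: Eset t|.
  rewrite /D cardsD (setIidPr _) //.
  by apply/subsetP => x; rewrite !inE => /andP [->].
apply: (leq_trans _ (eq_leq h2)); by rewrite -h3 addnC leq_add2l.
Qed.

Lemma union_bound n d (s t : 'S_n.+1): 3 <= d -> dB s 1 <= d - 1 ->
  dB t 1 <= d - 1 -> dB s t < d -> #|Eset s :|: Eset t| <= 2*d - 2.
Proof.
move=> hd h1 h2 h3.
have h4 := E_card s; have h5 := E_card t; have h6 := inter_card s t.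
have h7 := card_charset s.
have h8 : dB s t = #|charset s| - #|charset s :&: charset t| by rewrite /dB cardsD.
have h9 := cardsUI (Eset s) (Eset t).
have h10 : #|Eset s :&: Eset t| <= #|Eset s :|: Eset t|.
  by apply: subset_leq_card; apply/subsetP => x; rewrite !inE => /andP [->].
lia.
Qed.

Definition W n (U : {set 'I_n.+1}) : {set 'I_n.+1} := ord0 |: [set inord (nat_of_ord v).+1 | v in U].

Lemma s0_W n (s : 'S_n.+1) : s ord0 \in W (Eset s).
Proof.
rewrite /W in_setU1; case: (eqVneq (s ord0) ord0) => [->|ne] //=.
have hpos : 0 < s ord0 by rewrite lt0n; apply: contra ne => /eqP e; apply/eqP/val_inj.
have k1 : (s ord0).-1 < n.+1 by move: (ltn_ord (s ord0)); lia.
apply/imsetP; exists (inord (s ord0).-1).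
  rewrite inE; apply/eqP => e.
  case en: (nxt s (inord (s ord0).-1)) e => [y|] //= [ey].
  have hy : y = s ord0 by apply: ord_inj; rewrite ey /= inordK //; lia.
  by move/eqP: en; rewrite nxtP hy permK.
apply: ord_inj; rewrite /= inordK /= inordK //; rewrite (prednK hpos) //.
Qed.

Lemma nxt_W n (s : 'S_n.+1) v u : v \in Eset s -> nxt s v = Some u -> u \in W (Eset s).
Proof.
move=> hv e; rewrite /W in_setU1; case: (eqVneq u ord0) => [->|ne] //=.
have hpos : 0 < u by rewrite lt0n; apply: contra ne => /eqP e'; apply/eqP/val_inj.
have k1 : u.-1 < n.+1 by move: (ltn_ord u); lia.
apply/imsetP; exists (inord u.-1); last first.
  apply: ord_inj; rewrite /= inordK /= inordK //; rewrite (prednK hpos) //.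
apply/negPn/negP => hx; have := Eset_out hx.
case en: (nxt s (inord u.-1)) => [y|] //= [ey].
have hy : y = u by apply: ord_inj; rewrite ey /= inordK //; lia.
move/eqP: en; rewrite nxtP hy; move/eqP: (e); rewrite nxtP => /eqP -> /eqP [] /val_inj.
move/perm_inj => exv; move: hv; rewrite inE e exv /= inordK //.
have -> : (u.-1).+1 = u by lia.
by rewrite eqxx.
Qed.

Lemma valinord n k : k < n.+1 -> val (inord k : 'I_n.+1) = k.
Proof. exact: inordK. Qed.

Lemma expn_mono m1 m2 e : m1 <= m2 -> m1 ^ e <= m2 ^ e.
Proof. by move=> h; elim: e => // e IH; rewrite !expnS leq_mul. Qed.

Lemma cardA n (U : {set 'I_n.+1}) :
  #|[set s : 'S_n.+1 | Eset s \subset U]| <= #|U|.+1 * (#|U|.+2) ^ #|U|.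
Proof.
set A := [set s : 'S_n.+1 | Eset s \subset U].
pose R : {set option 'I_n.+1} := None |: [set Some w | w in W U].
pose code (s : 'S_n.+1) := (s ord0, [ffun v => if v \in U then nxt s v else None]).
have WS : forall s, s \in A -> W (Eset s) \subset W U.
  move=> s; rewrite inE => sU; apply/subsetP => w; rewrite /W !in_setU1.
  case/orP => [-> //| /imsetP [v hv ->]].
  by apply/orP; right; apply/imsetP; exists v => //; exact: (subsetP sU).
have inj : {in A &, injective code}.
  move=> s t hs ht [e0 /ffunP ef].
  move: (hs) (ht); rewrite !inE => sU tU.
  have en : forall v, nxt s v = nxt t v.
    move=> v; case: (boolP (v \in U)) => vU.
      by have := ef v; rewrite !ffunE vU.
    have a : v \notin Eset s by apply: contra vU; apply: (subsetP sU).
    have b : v \notin Eset t by apply: contra vU; apply: (subsetP tU).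
    have := Eset_out a; have := Eset_out b.
    case: (nxt s v) => [x|]; case: (nxt t v) => [y|] //= [ey] [ex].
    by congr Some; apply: ord_inj; rewrite ex ey.
  have ek : forall k, k < n.+1 -> s (inord k) = t (inord k).
    elim=> [_|k IH hk].
      by rewrite (_ : inord 0 = ord0) ?e0 //; apply: ord_inj; rewrite inordK.
    have hs1 : nxt s (s (inord k)) = Some (s (inord k.+1)).
      by apply/eqP; rewrite nxtP !permK !valinord // ltnW.
    have ht1 : nxt t (t (inord k)) = Some (t (inord k.+1)).
      by apply/eqP; rewrite nxtP !permK !valinord // ltnW.
    by move: hs1; rewrite IH ?(ltnW hk) // en ht1 => [[]].
  by apply/permP => i; rewrite -(inord_val i) ek.
have sub : code @: A \subset setX (W U) [set f in pffun_on None U R].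
  apply/subsetP => x /imsetP [s hs ->]; rewrite inE /=; apply/andP; split.
    exact: (subsetP (WS s hs)) (s0_W s).
  rewrite inE; apply/pffun_onP; split.
    by apply/subsetP => v; rewrite inE ffunE; case: (v \in U).
  move=> y /mapP [v hv ->]; rewrite mem_enum in hv; rewrite ffunE hv.
  rewrite /R in_setU1.
  case en: (nxt s v) => [u|] //=; apply/imsetP; exists u => //.
  case: (boolP (v \in Eset s)) => ve.
    exact: (subsetP (WS s hs)) (nxt_W ve en).
  have := Eset_out ve; rewrite en /= => [[eu]].
  rewrite /W in_setU1; apply/orP; right; apply/imsetP; exists v => //.
  by apply: val_inj; rewrite /= valinord -eu.
rewrite -(card_in_imset inj); apply: (leq_trans (subset_leq_card sub)).
rewrite cardsX; have -> : #|[set f in pffun_on None U R]| = #|R| ^ #|U| by rewrite cardsE card_pffun_on.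
have hW : #|W U| <= #|U|.+1.
  by rewrite /W cardsU1 -[#|U|.+1]add1n; apply: leq_add; [exact: leq_b1 | exact: leq_imset_card].
have hR : #|R| <= #|U|.+2.
  rewrite /R cardsU1 -[#|U|.+2]add1n; apply: leq_add; first exact: leq_b1.
  exact: leq_trans (leq_imset_card _ _) hW.
by apply: leq_mul => //; apply: expn_mono.
Qed.

Lemma ffact_le n k : n ^_ k <= n ^ k.
Proof.
elim: k => // k IH; rewrite ffactnSr expnSr; apply: leq_mul => //; exact: leq_subr.
Qed.

Lemma bin_le n k : 'C(n, k) <= n ^ k.
Proof.
apply: leq_trans (ffact_le n k); rewrite -bin_ffact; apply: leq_pmulr; exact: fact_gt0.
Qed.

Lemma Good_bound n e :
  #|[set U : {set 'I_n.+1} | (ord_max \in U) && (#|U| <= e.+1)]| <= e.+1 * n.+1 ^ e.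
Proof.
set G := [set U : {set 'I_n.+1} | _].
set Dr := [set B : {set 'I_n.+1} | (B \subset [set~ ord_max]) && (#|B| <= e)].
have sub : G \subset (fun B => ord_max |: B) @: Dr.
  apply/subsetP => U; rewrite inE => /andP [hm hc]; apply/imsetP.
  exists (U :\ ord_max); last by rewrite setD1K.
  rewrite inE; apply/andP; split.
    by apply/subsetP => x; rewrite !inE => /andP [h _].
  by have := cardsD1 ord_max U; rewrite hm add1n => h; rewrite h ltnS in hc.
apply: (leq_trans (subset_leq_card sub)); apply: (leq_trans (leq_imset_card _ _)).
rewrite -sum1_card (partition_big (fun B : {set 'I_n.+1} => (inord #|B| : 'I_e.+1)) predT) //=.
apply: (@leq_trans (\sum_(k < e.+1) n.+1 ^ e)); last by rewrite sum_nat_const card_ord.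
apply: leq_sum => k _; rewrite sum1dep_card.
apply: (@leq_trans #|[set B : {set 'I_n.+1} | B \subset [set~ ord_max] & #|B| == k]|).
  apply: subset_leq_card; apply/subsetP => B; rewrite !inE => /andP [/andP [h1 h2] /eqP h3].
  rewrite h1 /=; apply/eqP; rewrite -h3 inordK //; exact: h2.
rewrite cards_draws cardsC1 card_ord /=.
apply: leq_trans (bin_le n k) _; apply: leq_trans (expn_mono _ (leqnSn n)) _.
apply: leq_pexp2l => //; rewrite -ltnS; exact: ltn_ord.
Qed.

Lemma X_bound n d : 3 <= d ->
  Pnd n.+1 d <= ((2*d-2).+1 * (2*d-2).+2 ^ (2*d-2)) * ((2*d-2).+1 * (2*d-2).+2 ^ (2*d-2))
     * #|[set U : {set 'I_n.+1} | (ord_max \in U) && (#|U| <= 2*d-2)]|.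
Proof.
move=> hd.
set K := 2*d-2.
set c := K.+1 * K.+2 ^ K.
set X := [set x : 'S_n.+1 * 'S_n.+1 |
           [&& x.1 \in Hvert n.+1 d, x.2 \in Hvert n.+1 d & adjB d x.1 x.2]].
have h1 : Pnd n.+1 d <= #|X|.
  rewrite /Pnd; apply: (leq_trans _ (leq_imset_card (fun x : 'S_n.+1 * 'S_n.+1 => [set x.1; x.2]) X)).
  apply: subset_leq_card; apply/subsetP => E; rewrite inE.
  move=> /existsP [s /existsP [t /and4P [/eqP -> hs ht hst]]].
  by apply/imsetP; exists (s,t) => //; rewrite inE /= hs ht hst.
apply: (leq_trans h1).
set G := [set U : {set 'I_n.+1} | _].
rewrite -sum1_card (partition_big (fun x : 'S_n.+1 * 'S_n.+1 => Eset x.1 :|: Eset x.2) (mem G)) /=.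
  rewrite mulnC -sum_nat_const; apply: leq_sum => U hU.
  rewrite sum1dep_card.
  set A := [set s : 'S_n.+1 | Eset s \subset U].
  apply: (@leq_trans #|setX A A|).
    apply: subset_leq_card; apply/subsetP => [[s t]]; rewrite in_set /=.
    move=> /andP [_ /eqP hU'].
    by rewrite in_setX !in_set -hU' subsetUl subsetUr.
  rewrite cardsX; move: hU; rewrite inE => /andP [_ hc].
  have hA : #|A| <= c.
    apply: leq_trans (cardA U) _; apply: leq_mul => //.
    apply: leq_trans (expn_mono _ _) (leq_pexp2l _ hc) => //.
  by apply: leq_mul.
move=> [s t]; rewrite inE /= => /and3P [hs ht hst].
rewrite inE in_setU ordmax_E /=.
move: hs ht hst; rewrite !inE /adjB => /andP [_ hs] /andP [_ ht] /andP [_ hst].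
exact: union_bound.
Qed.

Theorem mainTheorem2 (d : nat) (hd : 3 <= d) :
  exists (C : nat) (N : nat), 0 < C /\
    forall n : nat, N <= n -> Pnd n d <= C * n ^ (2 * d - 3).
Proof.
set c := (2*d-2).+1 * (2*d-2).+2 ^ (2*d-2).
exists (c * c * (2*d-2)), 1; split.
  have h : 0 < 2*d-2 by lia.
  by rewrite !muln_gt0 expn_gt0 h.
case=> [//|m] _.
have hG := Good_bound m (2*d-3).
rewrite -(_ : 2*d-2 = (2*d-3).+1) in hG; last by lia.
apply: (leq_trans (X_bound m hd)).
rewrite -[c * c * _ * _]mulnA; apply: leq_mul => //.
Qed.
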